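(* Let $\Omega\subset V_0$ be open, let $f\colon\Omega\to\mathbb{R}$ be continuous and suppose $\Gamma_f$ is a ruled surface. Let $R_1,R_2$ be distinct rulings of $\Gamma_f$, and for $i=1,2$ let $I_i\subset\mathbb{R}$ and $g_{R_i}\colon I_i\to\mathbb{R}$ be such that $\Pi(R_i)=\{(x,0,g_{R_i}(x)):x\in I_i\}$. Then either $g_{R_1}(x)\le g_{R_2}(x)$ for all $x\in I_1\cap I_2$, or $g_{R_1}(x)\ge g_{R_2}(x)$ for all $x\in I_1\cap I_2$.
   Context: $\mathbb{H}$ is $\mathbb{R}^3$ with product $(x,y,z)\cdot(x',y',z')=(x+x',y+y',z+z'+\frac{xy'-yx'}{2})$; $Y^t=(0,t,0)$. A horizontal line is a set $\{p\cdot tv:t\in\mathbb{R}\}$, $v=(a,b,0)\neq0$; a ruled surface is a union of horizontal line segments (rulings) with endpoints in its boundary. $V_0=\{(x,0,z)\}$; for $f\colon\Omega\to\mathbb{R}$, $\Gamma_f=\{u\cdot Y^{f(u)}:u\in\Omega\}$. The intrinsic projection is $\Pi(x,y,z)=(x,0,z-\frac{xy}{2})$ (the projection of a horizontal segment not parallel to $Y$ is the graph of a quadratic function of $x$). *)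

(* Defs.v *)
From Stdlib Require Import Reals Lra.
Open Scope R_scope.

Record H := mkH { hx : R ; hy : R ; hz : R }.

Definition hmul (p q : H) : H :=
  mkH (hx p + hx q) (hy p + hy q)
      (hz p + hz q + (hx p * hy q - hy p * hx q) / 2).

Definition hset := H -> Prop.

(* Euclidean topology of R^3 (max-norm balls): closure of a set *)
Definition hclosure (S : hset) : hset := fun p =>
  forall eps, 0 < eps -> exists q, S q /\
    Rabs (hx p - hx q) < eps /\ Rabs (hy p - hy q) < eps /\ Rabs (hz p - hz q) < eps.

Definition hboundary (S : hset) : hset := fun p => hclosure S p /\ ~ S p.

Definition hvec (t a b : R) : H := mkH (t * a) (t * b) 0.

Definition in_param (lo hi : option R) (t : R) : Prop :=
  (match lo with None => True | Some l => l < t end) /\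
  (match hi with None => True | Some h => t < h end).

Definition is_ruling (S : hset) (Rl : hset) : Prop :=
  exists (p : H) (a b : R) (lo hi : option R),
    (a <> 0 \/ b <> 0) /\
    (exists t, in_param lo hi t) /\
    (forall q, Rl q <-> exists t, in_param lo hi t /\ q = hmul p (hvec t a b)) /\
    (forall q, Rl q -> S q) /\
    (forall l, lo = Some l -> hboundary S (hmul p (hvec l a b))) /\
    (forall h, hi = Some h -> hboundary S (hmul p (hvec h a b))).

Definition ruled_surface (S : hset) : Prop :=
  forall q, S q -> exists Rl, is_ruling S Rl /\ Rl q.

(* Subsets of V0 = {(x,0,z)} are encoded as predicates on (x,z). *)
Definition open_V0 (Om : R -> R -> Prop) : Prop :=
  forall x z, Om x z -> exists d, 0 < d /\
    forall x' z', Rabs (x' - x) < d -> Rabs (z' - z) < d -> Om x' z'.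

Definition continuous_on_V0 (Om : R -> R -> Prop) (f : R -> R -> R) : Prop :=
  forall x z, Om x z -> forall eps, 0 < eps -> exists d, 0 < d /\
    forall x' z', Om x' z' -> Rabs (x' - x) < d -> Rabs (z' - z) < d ->
      Rabs (f x' z' - f x z) < eps.

(* Intrinsic graph Gamma_f = { u . Y^{f(u)} : u in Omega } *)
Definition igraph (Om : R -> R -> Prop) (f : R -> R -> R) : hset := fun q =>
  exists x z, Om x z /\ q = hmul (mkH x 0 z) (mkH 0 (f x z) 0).

Definition Pi (p : H) : H := mkH (hx p) 0 (hz p - hx p * hy p / 2).

(* Main.v *)
Require Import Defs.
From Stdlib Require Import Reals Lra Classical.
Open Scope R_scope.

Definition Zf p a b t := hz (Pi (hmul p (hvec t a b))).

Lemma graph_y Om f q : igraph Om f q -> hy q = f (hx (Pi q)) (hz (Pi q)).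
Proof.
  intros [x [z [_ ->]]]. unfold Pi, hmul; simpl.
  rewrite !Rplus_0_l, !Rplus_0_r. f_equal. field.
Qed.

Lemma in_param_conv lo hi t0 t1 s :
  in_param lo hi t0 -> in_param lo hi t1 -> (s - t0) * (t1 - s) >= 0 -> in_param lo hi s.
Proof.
  intros H0 H1 Hs.
  assert (Hb : (t0 <= s <= t1) \/ (t1 <= s <= t0)).
  { destruct (Rle_dec t0 s); destruct (Rle_dec s t1); try (left; lra);
    destruct (Rle_dec t1 s); destruct (Rle_dec s t0); try (right; lra); nra. }
  destruct lo as [l|], hi as [h|]; unfold in_param in *; simpl in *; lra.
Qed.

Lemma ruling_pt (Rl : hset) (I : R -> Prop) g p a b lo hi
  (hR : forall q, Rl q <-> exists t, in_param lo hi t /\ q = hmul p (hvec t a b))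
  (hg : forall q, (exists r, Rl r /\ Pi r = q) <-> (exists x, I x /\ q = mkH x 0 (g x)))
  x : I x -> exists t, in_param lo hi t /\ x = hx p + t * a /\ g x = Zf p a b t.
Proof.
  intros Hx. destruct (proj2 (hg (mkH x 0 (g x)))) as [r [Hr HP]].
  { exists x; split; auto. }
  destruct (proj1 (hR r) Hr) as [t [Ht ->]].
  exists t; split; auto.
  unfold Zf. rewrite HP. simpl.
  assert (E : hx (Pi (hmul p (hvec t a b))) = x) by (rewrite HP; reflexivity).
  unfold Pi, hmul, hvec in E; simpl in E. split; [lra | reflexivity].
Qed.

Lemma Zf_diff p a b x xs : a <> 0 ->
  Zf p a b ((x - hx p)/a) - Zf p a b ((xs - hx p)/a) =
  - (x - xs) * (hy p + (xs - hx p)/a * b) - b/a * (x - xs)^2/2.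
Proof. intros Ha. unfold Zf, Pi, hmul, hvec; simpl. field. auto. Qed.

Theorem lemma2p1 (Om : R -> R -> Prop) (f : R -> R -> R)
  (hOm : open_V0 Om) (hf : continuous_on_V0 Om f)
  (hruled : ruled_surface (igraph Om f))
  (R1 R2 : hset)
  (hR1 : is_ruling (igraph Om f) R1) (hR2 : is_ruling (igraph Om f) R2)
  (hdist : ~ (forall q, R1 q <-> R2 q))
  (I1 I2 : R -> Prop) (g1 g2 : R -> R)
  (hg1 : forall q, (exists r, R1 r /\ Pi r = q) <-> (exists x, I1 x /\ q = mkH x 0 (g1 x)))
  (hg2 : forall q, (exists r, R2 r /\ Pi r = q) <-> (exists x, I2 x /\ q = mkH x 0 (g2 x))) :
  (forall x, I1 x -> I2 x -> g1 x <= g2 x) \/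
  (forall x, I1 x -> I2 x -> g1 x >= g2 x).
Proof.
  destruct (classic (forall x, I1 x -> I2 x -> g1 x <= g2 x)) as [H|H]; [left; auto|right].
  apply not_all_ex_not in H. destruct H as [x0 H].
  intros x1 Hx1 Hy1. apply Rnot_lt_ge. intros Hlt1.
  assert (Hx0 : I1 x0) by (apply NNPP; intro C; apply H; intro; contradiction).
  assert (Hy0 : I2 x0) by (apply NNPP; intro C; apply H; intros _ ?; contradiction).
  assert (Hgt0 : g1 x0 > g2 x0) by (apply Rnot_le_gt; intro C; apply H; auto).
  clear H.
  destruct hR1 as [p [a [b [lo [hi [_ [_ [hR1e [hR1S _]]]]]]]]].
  destruct hR2 as [p' [a' [b' [lo' [hi' [_ [_ [hR2e [hR2S _]]]]]]]]].
  destruct (ruling_pt _ _ _ _ _ _ _ _ hR1e hg1 x0 Hx0) as [t10 [Ht10 [E10 G10]]].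
  destruct (ruling_pt _ _ _ _ _ _ _ _ hR1e hg1 x1 Hx1) as [t11 [Ht11 [E11 G11]]].
  destruct (ruling_pt _ _ _ _ _ _ _ _ hR2e hg2 x0 Hy0) as [t20 [Ht20 [E20 G20]]].
  destruct (ruling_pt _ _ _ _ _ _ _ _ hR2e hg2 x1 Hy1) as [t21 [Ht21 [E21 G21]]].
  assert (Hne : x0 <> x1) by (intro Heq; rewrite Heq in Hgt0; lra).
  assert (Ha : a <> 0) by (intro; subst; apply Hne; lra).
  assert (Ha' : a' <> 0) by (intro; subst; apply Hne; lra).
  set (D := fun x => Zf p a b ((x - hx p)/a) - Zf p' a' b' ((x - hx p')/a')).
  assert (HD0 : D x0 = g1 x0 - g2 x0).
  { unfold D. replace ((x0 - hx p)/a) with t10 by (rewrite E10; field; auto).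
    replace ((x0 - hx p')/a') with t20 by (rewrite E20; field; auto). lra. }
  assert (HD1 : D x1 = g1 x1 - g2 x1).
  { unfold D. replace ((x1 - hx p)/a) with t11 by (rewrite E11; field; auto).
    replace ((x1 - hx p')/a') with t21 by (rewrite E21; field; auto). lra. }
  assert (Hc : continuity D) by (unfold D, Zf, Pi, hmul, hvec; simpl; reg).
  assert (Hxs : exists xs, (xs - x0) * (x1 - xs) >= 0 /\ D xs = 0).
  { destruct (Rle_dec x0 x1).
    - destruct (IVT_cor D x0 x1 Hc r) as [z [Hz1 Hz2]]. nra. exists z; split; auto. nra.
    - destruct (IVT_cor D x1 x0 Hc) as [z [Hz1 Hz2]]; try lra. nra. exists z; split; auto. nra. }
  destruct Hxs as [xs [Hbw HDs]].
  set (s1 := (xs - hx p)/a). set (s2 := (xs - hx p')/a').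
  assert (Hs1 : in_param lo hi s1).
  { apply (in_param_conv _ _ t10 t11); auto.
    replace ((s1 - t10) * (t11 - s1)) with ((xs - x0) * (x1 - xs) / (a*a)).
    2:{ unfold s1; rewrite E10, E11; field; auto. }
    apply Rle_ge. apply Rmult_le_pos; [lra|]. apply Rlt_le, Rinv_0_lt_compat. nra. }
  assert (Hs2 : in_param lo' hi' s2).
  { apply (in_param_conv _ _ t20 t21); auto.
    replace ((s2 - t20) * (t21 - s2)) with ((xs - x0) * (x1 - xs) / (a'*a')).
    2:{ unfold s2; rewrite E20, E21; field; auto. }
    apply Rle_ge. apply Rmult_le_pos; [lra|]. apply Rlt_le, Rinv_0_lt_compat. nra. }
  assert (Hr1 := hR1S _ (proj2 (hR1e _) (ex_intro _ s1 (conj Hs1 eq_refl)))).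
  assert (Hr2 := hR2S _ (proj2 (hR2e _) (ex_intro _ s2 (conj Hs2 eq_refl)))).
  apply graph_y in Hr1. apply graph_y in Hr2.
  assert (EP : Pi (hmul p (hvec s1 a b)) = Pi (hmul p' (hvec s2 a' b'))).
  { assert (Z0 : Zf p a b s1 = Zf p' a' b' s2) by (unfold D in HDs; fold s1 s2 in HDs; lra).
    unfold Zf in Z0.
    destruct (Pi (hmul p (hvec s1 a b))) as [u1 v1 w1] eqn:P1.
    destruct (Pi (hmul p' (hvec s2 a' b'))) as [u2 v2 w2] eqn:P2.
    simpl in Z0. subst.
    assert (U1 : hx (Pi (hmul p (hvec s1 a b))) = xs)
      by (unfold Pi, hmul, hvec, s1; simpl; field; auto).
    assert (U2 : hx (Pi (hmul p' (hvec s2 a' b'))) = xs)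
      by (unfold Pi, hmul, hvec, s2; simpl; field; auto).
    rewrite P1 in U1. rewrite P2 in U2. simpl in U1, U2.
    assert (V1 : hy (Pi (hmul p (hvec s1 a b))) = 0) by reflexivity.
    assert (V2 : hy (Pi (hmul p' (hvec s2 a' b'))) = 0) by reflexivity.
    rewrite P1 in V1. rewrite P2 in V2. simpl in V1, V2. subst. reflexivity. }
  rewrite EP in Hr1. rewrite <- Hr2 in Hr1. simpl in Hr1.
  assert (Y : hy p + s1 * b = hy p' + s2 * b') by lra.
  assert (K : forall x, D x = - (b/a - b'/a') * (x - xs)^2 / 2).
  { intro x. unfold D.
    assert (A1 := Zf_diff p a b x xs Ha). assert (A2 := Zf_diff p' a' b' x xs Ha').
    unfold D in HDs. fold s1 s2 in HDs, A1, A2.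
    assert (Dq : hy p + s1 * b - (hy p' + s2 * b') = 0) by lra.
    replace (Zf p a b ((x - hx p) / a) - Zf p' a' b' ((x - hx p') / a'))
      with ((Zf p a b ((x - hx p) / a) - Zf p a b s1) - (Zf p' a' b' ((x - hx p') / a') - Zf p' a' b' s2)
            + (Zf p a b s1 - Zf p' a' b' s2)) by ring.
    rewrite A1, A2, HDs.
    replace (hy p' + s2 * b') with (hy p + s1 * b) by lra. field. split; auto. }
  rewrite K in HD0, HD1.
  set (k := b/a - b'/a') in *.
  assert (P0 : 0 <= (x0 - xs)^2) by (apply pow2_ge_0).
  assert (P1 : 0 <= (x1 - xs)^2) by (apply pow2_ge_0).
  set (u0 := (x0 - xs)^2) in *. set (u1 := (x1 - xs)^2) in *.
  destruct (Rle_dec 0 k) as [Hk|Hk].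
  - assert (0 <= k * u0) by (apply Rmult_le_pos; auto). lra.
  - assert (0 <= (-k) * u1) by (apply Rmult_le_pos; lra). lra.
Qed.
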